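(* Let $\varphi:[1,\infty]\to[1,\infty]$ be an admissible function, with constants $\gamma,\beta>0$ as in the definition below. Then for every $x\in\mathbb R$ and every $1\le q_0<\infty$, $$ \inf_{q\in[q_0,\infty)}\varphi(q)e^{-\frac{x}{q}}\le \begin{cases} \varphi(q_0)e^{-\frac{x}{q_0}}, & \text{if } x\ge 0,\\[2pt] q_0^{\beta}e^{\frac{1}{q_0}}\varphi(1-x), & \text{if } x<0. \end{cases} $$
   Context: A function $\varphi:[1,\infty]\to[1,\infty]$ is called admissible if (a) $\varphi(1)=1$ and $\varphi$ is log-concave, i.e. $\theta\log\varphi(x)+(1-\theta)\log\varphi(y)\le\log\varphi(\theta x+(1-\theta)y)$ for all $x,y\ge1$, $0\le\theta\le1$; and (b) there exist $\gamma,\beta>0$ such that for every $x\ge1$, $\frac{\gamma}{x}\le\frac{\varphi'(x)}{\varphi(x)}\le\frac{\beta}{x}$. *)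

(* Defs.v *)
From Stdlib Require Import Reals.
From Coquelicot Require Import Coquelicot.
Open Scope R_scope.

Definition log_concave_on_1oo (phi : R -> R) : Prop :=
  forall x y theta, 1 <= x -> 1 <= y -> 0 <= theta <= 1 ->
    theta * ln (phi x) + (1 - theta) * ln (phi y)
      <= ln (phi (theta * x + (1 - theta) * y)).

Definition derivative_on_1oo (phi phi' : R -> R) : Prop :=
  (forall x, 1 < x -> is_derive phi x (phi' x)) /\
  filterlim (fun h => (phi (1 + h) - phi 1) / h) (at_right 0) (locally (phi' 1)).

Definition admissible_with (phi : R -> R) (gamma beta : R) : Prop :=
  (forall x, 1 <= x -> 1 <= phi x) /\
  phi 1 = 1 /\
  log_concave_on_1oo phi /\
  0 < gamma /\ 0 < beta /\
  exists phi' : R -> R, derivative_on_1oo phi phi' /\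
    forall x, 1 <= x -> gamma / x <= phi' x / phi x <= beta / x.

Definition inf_tail (phi : R -> R) (x q0 : R) : Rbar :=
  Glb_Rbar (fun y => exists q, q0 <= q /\ y = phi q * exp (- x / q)).

(* Main.v *)
Require Import Defs.
From Stdlib Require Import Reals Lra.
From Coquelicot Require Import Coquelicot.
Open Scope R_scope.

Lemma exp_le_mono a b : a <= b -> exp a <= exp b.
Proof. intros [h|h]; [left; now apply exp_increasing|subst; lra]. Qed.

Lemma key_mono (phi phi' : R -> R) (beta : R) :
  (forall x, 1 <= x -> 1 <= phi x) ->
  (forall x, 1 < x -> is_derive phi x (phi' x)) ->
  (forall x, 1 <= x -> phi' x / phi x <= beta / x) ->
  forall y z, 1 < y -> y <= z ->
    ln (phi z) - beta * ln z <= ln (phi y) - beta * ln y.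
Proof.
  intros Hge Hd Hb y z Hy Hyz.
  set (g := fun t => ln (phi t) - beta * ln t).
  assert (Dg : forall t, 1 < t -> is_derive g t (phi' t / phi t - beta / t)).
  { intros t Ht.
    assert (Hp : 0 < phi t) by (specialize (Hge t); lra).
    assert (A : is_derive (fun t => ln (phi t)) t (phi' t / phi t)).
    { assert (H1 := is_derive_comp ln phi t (/ phi t) (phi' t)).
      replace (phi' t / phi t) with (scal (phi' t) (/ phi t)).
      2: { unfold scal; simpl; unfold mult; simpl; unfold Rdiv; ring. }
      apply H1; [| now apply Hd].
      apply is_derive_Reals, derivable_pt_lim_ln; exact Hp. }
    assert (B : is_derive (fun t => beta * ln t) t (beta / t)).
    { replace (beta / t) with (scal beta (/ t)).
      2: { unfold scal; simpl; unfold mult; simpl; unfold Rdiv; ring. }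
      eapply is_derive_scal. apply is_derive_Reals, derivable_pt_lim_ln; lra. }
    exact (is_derive_minus _ _ _ _ _ A B). }
  destruct (MVT_gen g y z (fun t => phi' t / phi t - beta / t)) as [c [Hc Heq]].
  - intros t Ht. apply Dg. rewrite Rmin_left in Ht; lra.
  - intros t Ht. rewrite Rmin_left in Ht; [|lra].
    apply continuity_pt_filterlim. apply (ex_derive_continuous (V:=R_NormedModule) g).
    eexists. apply Dg. lra.
  - rewrite Rmin_left in Hc; [|lra]. rewrite Rmax_right in Hc; [|lra].
    fold (g z) (g y).
    assert (phi' c / phi c - beta / c <= 0) by (specialize (Hb c); lra).
    assert (g z - g y <= 0) by (rewrite Heq; apply Rmult_le_0_r; lra).
    lra.
Qed.

Theorem mainTheorem1 (phi : R -> R) (gamma beta : R) :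
  admissible_with phi gamma beta ->
  forall x q0 : R, 1 <= q0 ->
    Rbar_le (inf_tail phi x q0)
      (Finite (if Rle_dec 0 x
               then phi q0 * exp (- x / q0)
               else Rpower q0 beta * exp (1 / q0) * phi (1 - x))).
Proof.
  intros [Hge [H1 [_ [Hg [Hb [phi' [[Hd _] Hr]]]]]]] x q0 Hq0.
  unfold inf_tail.
  destruct (Glb_Rbar_correct (fun y => exists q, q0 <= q /\ y = phi q * exp (- x / q))) as [Hlb _].
  destruct (Rle_dec 0 x) as [Hx|Hx].
  - apply Hlb. exists q0. split; [lra|reflexivity].
  - eapply Rbar_le_trans. apply Hlb. exists (q0 * (1 - x)). split; [|reflexivity].
    { assert (q0 * 1 <= q0 * (1 - x)) by (apply Rmult_le_compat_l; lra). lra. }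
    simpl.
    set (y := 1 - x). set (z := q0 * y).
    assert (Hy : 1 < y) by (unfold y; lra).
    assert (Hyz : y <= z) by (unfold z; assert (1 * y <= q0 * y) by (apply Rmult_le_compat_r; lra); lra).
    assert (K := key_mono phi phi' beta Hge Hd (fun t Ht => proj2 (Hr t Ht)) y z Hy Hyz).
    assert (Hz0 : 0 < z) by lra.
    assert (Hpz : 0 < phi z) by (specialize (Hge z); lra).
    assert (Hpy : 0 < phi y) by (specialize (Hge y); lra).
    assert (Hlnz : ln z = ln q0 + ln y) by (unfold z; apply ln_mult; lra).
    assert (Pz : phi z <= Rpower q0 beta * phi y).
    { rewrite <- (exp_ln (phi z)) by lra. rewrite <- (exp_ln (phi y)) by lra.
      unfold Rpower. rewrite <- exp_plus. apply exp_le_mono. rewrite Hlnz, Rmult_plus_distr_l in K. lra. }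
    assert (E : exp (- x / z) <= exp (1 / q0)).
    { apply exp_le_mono. unfold z, y.
      assert (Hp : 0 < q0 * (1 - x)) by (apply Rmult_lt_0_compat; lra).
      replace (1 / q0) with ((1 - x) / (q0 * (1 - x))) by (field; lra).
      unfold Rdiv. apply Rmult_le_compat_r; [left; now apply Rinv_0_lt_compat|lra]. }
    assert (0 < exp (- x / z)) by apply exp_pos.
    assert (0 < Rpower q0 beta) by (unfold Rpower; apply exp_pos).
    apply Rle_trans with (Rpower q0 beta * phi y * exp (- x / z)).
    + apply Rmult_le_compat_r; lra.
    + rewrite !Rmult_assoc. apply Rmult_le_compat_l; [lra|].
      rewrite (Rmult_comm (exp (1 / q0))). apply Rmult_le_compat_l; lra.
Qed.
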